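(* If a connected graph $G$ of order $n$ satisfies $\mathrm{sn}(G)=n-2$, then $\mathrm{ivs}_\chi(G)=1$.
   Context: All graphs are finite and simple. For a graph $G=(V,E)$ with $k=\chi(G)$, a proper $k$-colouring is a map $c:V\to[k]$ with $c(u)\neq c(v)$ for every edge $uv$. A set $S\subseteq V$ is a determining set for $(G,c)$ if there is no proper $k$-colouring $c'\neq c$ with $c'(s)=c(s)$ for all $s\in S$; a critical set is an inclusion-minimal determining set. $\mathrm{sn}(G)$ is the minimum size of a critical set over all proper $\chi(G)$-colourings $c$ of $G$ (equivalently, the minimum number of vertices coloured in a partial colouring that extends uniquely to a proper $\chi(G)$-colouring). The independent chromatic vertex stability number $\mathrm{ivs}_\chi(G)$ is the size of a smallest independent set $S\subseteq V$ such that $\chi(G\setminus S)<\chi(G)$. *)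

(* Defs.v *)
(* Simple graphs: a symmetric irreflexive relation e on a finType T. *)
From mathcomp Require Import all_boot.
Unset Printing Implicit Defensive.

Section Graphs.
Variable T : finType.
Implicit Types (e : rel T) (S : {set T}).

(* c : T -> 'I_k is a proper k-colouring (colours 0..k-1 stand for [k]) *)
Definition proper_col e {k} (c : {ffun T -> 'I_k}) : bool :=
  [forall x, forall y, e x y ==> (c x != c y)].

Definition colourable e k : bool := [exists c : {ffun T -> 'I_k}, proper_col e c].

(* chromatic number: least k admitting a proper k-colouring
   (a proper #|T|-colouring always exists for an irreflexive e) *)
Definition chi e : nat := \big[minn/#|T|]_(k < #|T|.+1 | colourable e k) k.

Definition determining (e : rel T) (c : {ffun T -> 'I_(chi e)}) S : bool :=
  [forall c' : {ffun T -> 'I_(chi e)},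
     (proper_col e c' && [forall s in S, c' s == c s]) ==> (c' == c)].

Definition critical (e : rel T) (c : {ffun T -> 'I_(chi e)}) S : bool :=
  determining e c S && [forall S' : {set T}, (S' \proper S) ==> ~~ determining e c S'].

Definition sn e : nat :=
  \big[minn/#|T|]_(c : {ffun T -> 'I_(chi e)} | proper_col e c)
     \big[minn/#|T|]_(S : {set T} | critical e c S) #|S|.

Definition independent e S : bool := [forall x in S, forall y in S, ~~ e x y].

Definition connected e : Prop := forall x y : T, connect e x y.
End Graphs.
Arguments proper_col {T} e {k} c.
Arguments colourable {T} e k.
Arguments chi {T} e.
Arguments determining {T} e c S.
Arguments critical {T} e c S.
Arguments sn {T} e.
Arguments independent {T} e S.
Arguments connected {T} e.

Definition induced {T : finType} (e : rel T) (A : {set T}) : rel {x : T | x \in A} :=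
  fun x y => e (val x) (val y).

Definition ivs_chi {T : finType} (e : rel T) : nat :=
  \big[minn/#|T|]_(S : {set T} | independent e S && (chi (induced e (~: S)) < chi e)) #|S|.

(* Main.v *)
Require Import Defs.
From mathcomp Require Import all_boot zify.
Set Implicit Arguments. Unset Strict Implicit. Unset Printing Implicit Defensive.

Lemma bigmin_le (I : finType) (P : pred I) (F : I -> nat) d i0 :
  P i0 -> \big[minn/d]_(i | P i) F i <= F i0.
Proof.
move=> Pi0; have: i0 \in index_enum I by rewrite mem_index_enum.
elim: (index_enum I) => [|x r IH] //=; rewrite big_cons inE.
case/orP => [/eqP <-|/IH H]; first by rewrite Pi0 geq_minl.
by case: ifP => _ //; exact: leq_trans (geq_minr _ _) H.
Qed.

Lemma bigmin_ledef (I : finType) (P : pred I) (F : I -> nat) d :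
  \big[minn/d]_(i | P i) F i <= d.
Proof.
apply: (big_rec (fun x => x <= d)) => // i x _ hx.
by rewrite geq_min hx orbT.
Qed.

Section Chi.
Variable T : finType.
Variable e : rel T.

Lemma properP k (c : {ffun T -> 'I_k}) : proper_col e c -> forall x y, e x y -> c x != c y.
Proof. by move=> /forallP pc x y exy; have /forallP/(_ y)/implyP := pc x; apply. Qed.

Lemma properI k (c : {ffun T -> 'I_k}) : (forall x y, e x y -> c x != c y) -> proper_col e c.
Proof. by move=> h; apply/forallP=> x; apply/forallP=> y; apply/implyP; apply: h. Qed.

Lemma colourable_card : irreflexive e -> colourable e #|T|.
Proof.
move=> eirr; apply/existsP; exists [ffun x => enum_rank x]; apply: properI => x y exy.
rewrite !ffunE; apply/negP=> /eqP /enum_rank_inj exy'; subst; by rewrite eirr in exy.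
Qed.

Lemma chi_le k : colourable e k -> chi e <= k.
Proof.
move=> ck; rewrite /chi; case: (ltnP k #|T|.+1) => hk.
  exact: (@bigmin_le _ (fun j : 'I_#|T|.+1 => colourable e j) (fun j : 'I_#|T|.+1 => nat_of_ord j) #|T| (Ordinal hk) ck).
by apply: leq_trans (bigmin_ledef _ _ _) _; apply: ltnW.
Qed.

Lemma chi_col : irreflexive e -> colourable e (chi e).
Proof.
move=> eirr; rewrite /chi; apply: (big_ind (fun m => colourable e m)) => //.
  exact: colourable_card.
by move=> x y cx cy; rewrite /minn; case: ifP.
Qed.
End Chi.

Section Col.
Variable T : finType.
Variable e : rel T.
Hypothesis esym : symmetric e.
Hypothesis eirr : irreflexive e.

Definition full k (c : {ffun T -> 'I_k}) v :=
  [forall l : 'I_k, (l != c v) ==> [exists x, e v x && (c x == l)]].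

Definition Wit k (c : {ffun T -> 'I_k}) (U : {set T}) v :=
  forall l, l != c v -> exists2 x, x \notin U & e v x && (c x == l).

Lemma fullP k (c : {ffun T -> 'I_k}) v : full c v -> forall l, l != c v -> exists2 x, e v x & c x = l.
Proof.
move=> /forallP fv l hl; have /implyP/(_ hl)/existsP[x /andP[h1 /eqP h2]] := fv l.
by exists x.
Qed.

Lemma WitH1 k (c : {ffun T -> 'I_k}) (U : {set T}) v : full c v -> (forall x, x \in U -> ~~ e v x) -> Wit c U v.
Proof.
move=> fv hU l hl; have [x evx cx] := fullP fv hl; exists x; last by rewrite evx cx eqxx.
by apply/negP=> /hU; rewrite evx.
Qed.

Lemma WitH2 k (c : {ffun T -> 'I_k}) (U : {set T}) v j : full c v -> (forall x, x \in U -> e v x -> c x = j) ->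
  (exists2 y, y \notin U & e v y && (c y == j)) -> Wit c U v.
Proof.
move=> fv hU [y yU hy] l hl; case: (eqVneq l j) => [->|lj]; first by exists y.
have [x evx cx] := fullP fv hl; exists x; last by rewrite evx cx eqxx.
by apply/negP=> /hU /(_ evx); rewrite cx; apply/eqP.
Qed.

Lemma chain_step k (c c' : {ffun T -> 'I_k}) (U U' : {set T}) v : proper_col e c' ->
  (forall x, x \notin U -> c' x = c x) -> Wit c U v -> U \subset v |: U' ->
  forall x, x \notin U' -> c' x = c x.
Proof.
move=> pc' agr W sU x xU'; case: (eqVneq x v) => [->|xv].
  apply/eqP; apply: contraT => neq.
  have [y yU /andP[evy /eqP cy]] := W (c' v) neq.
  have := properP pc' evy; by rewrite (agr y yU) cy eqxx.
apply: agr; apply/negP=> /(subsetP sU); by rewrite !inE (negbTE xv) (negbTE xU').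
Qed.

Definition good3 (c : {ffun T -> 'I_(chi e)}) :=
  [exists u1, exists u2, exists u3,
    [&& u1 != u2, u1 != u3, u2 != u3 & determining e c (~: [set u1; u2; u3])]].

Lemma mkgood (c : {ffun T -> 'I_(chi e)}) u1 u2 u3 : u1 != u2 -> u1 != u3 -> u2 != u3 ->
  Wit c [set u1; u2; u3] u1 -> Wit c [set u2; u3] u2 -> Wit c [set u3] u3 -> good3 c.
Proof.
move=> d12 d13 d23 W1 W2 W3; apply/existsP; exists u1; apply/existsP; exists u2; apply/existsP; exists u3.
rewrite d12 d13 d23 /=; apply/forallP=> c'; apply/implyP=> /andP[pc' /forallP agr].
have a0 : forall x, x \notin [set u1; u2; u3] -> c' x = c x.
  by move=> x xU; have := agr x; rewrite in_setC xU => /eqP.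
have s1 : [set u1; u2; u3] \subset u1 |: [set u2; u3] by apply/subsetP=> x; rewrite !inE orbA; exact: id.
have s2 : [set u2; u3] \subset u2 |: [set u3] by apply/subsetP=> x; rewrite !inE; exact: id.
have s3 : [set u3] \subset u3 |: set0 by apply/subsetP=> x; rewrite !inE orbF; exact: id.
have a1 := chain_step pc' a0 W1 s1.
have a2 := chain_step pc' a1 W2 s2.
have a3 := chain_step pc' a2 W3 s3.
by apply/eqP/ffunP=> x; rewrite a3 // inE.
Qed.

Lemma crit_sub (c : {ffun T -> 'I_(chi e)}) D : determining e c D ->
  exists2 S, critical e c S & #|S| <= #|D|.
Proof.
move=> dD.
pose P n := [exists S : {set T}, [&& S \subset D, determining e c S & #|S| == n]].
have exP : exists n, P n by exists #|D|; apply/existsP; exists D; rewrite subxx dD eqxx.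
case: (ex_minnP exP) => m /existsP[S /and3P[sSD dS /eqP cS]] minm.
exists S; last by apply: subset_leq_card.
rewrite /critical dS /=; apply/forallP=> S'; apply/implyP=> pS'; apply/negP=> dS'.
have : P #|S'|.
  apply/existsP; exists S'; rewrite dS' eqxx !andbT /=.
  by apply: (subset_trans _ sSD); case/andP: pS'.
move/minm; rewrite -cS; have := proper_card pS'; rewrite ltnNge => /negP; apply.
Qed.

Lemma sn_le (c : {ffun T -> 'I_(chi e)}) D : proper_col e c -> determining e c D -> sn e <= #|D|.
Proof.
move=> pc dD; have [S cS hS] := crit_sub dD; apply: leq_trans hS.
rewrite /sn; apply: leq_trans (@bigmin_le _ (fun c => proper_col e c) _ #|T| c pc) _.
exact: (@bigmin_le _ (fun S => critical e c S) (fun S => #|S|) #|T| S cS).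
Qed.

End Col.

Section Core.
Variable T : finType.
Variable e : rel T.
Hypothesis esym : symmetric e.
Hypothesis eirr : irreflexive e.
Variable c : {ffun T -> 'I_(chi e)}.
Hypothesis pc : proper_col e c.
Hypothesis H2 : forall i : 'I_(chi e), exists a1, exists a2,
  [/\ a1 != a2, c a1 = i, c a2 = i, full e c a1 & full e c a2].
Hypothesis NG : ~~ good3 c.

Lemma in3 (x a b d : T) : x \in [set a; b; d] -> [\/ x = a, x = b | x = d].
Proof. by rewrite !inE => /orP[/orP[]|] /eqP->; [constructor 1|constructor 2|constructor 3]. Qed.

Lemma in2 (x a b : T) : x \in [set a; b] -> x = a \/ x = b.
Proof. by rewrite !inE => /orP[] /eqP->; [left|right]. Qed.

Lemma NGc : good3 c -> forall P : Prop, P.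
Proof. by move=> g; move: NG; rewrite g. Qed.

Lemma sameNadj x y : c x = c y -> ~~ e x y.
Proof. by move=> cxy; apply/negP=> /(properP pc); rewrite cxy eqxx. Qed.

Lemma adj_neq x y : e x y -> x != y.
Proof. by move=> exy; apply/negP=> /eqP E; subst; rewrite eirr in exy. Qed.

Lemma col_neq x y : c x != c y -> x != y.
Proof. by apply: contra => /eqP->. Qed.

Lemma other (i : 'I_(chi e)) b : exists b', [/\ b' != b, c b' = i & full e c b'].
Proof.
have [p [q [pq cp cq fp fq]]] := H2 i.
case: (eqVneq p b) => [E|pb]; last by exists p.
by exists q; split => //; rewrite -E eq_sym.
Qed.

Section Base.
Variables a1 a2 : T.
Hypothesis a12 : a1 != a2.
Hypothesis ca : c a2 = c a1.
Hypothesis fa1 : full e c a1.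
Hypothesis fa2 : full e c a2.

Lemma F1 b : full e c b -> c b != c a1 -> e a1 b || e a2 b.
Proof.
move=> fb cb; apply: contraT; rewrite negb_or => /andP[n1 n2].
have b1 : a1 != b by rewrite eq_sym; apply: col_neq.
have b2 : a2 != b by rewrite eq_sym; apply: col_neq; rewrite ca.
apply: NGc; apply: (mkgood a12 b1 b2).
- apply: WitH1 => // x; move=> /in3[]->; first by rewrite eirr.
    by apply: sameNadj.
  by [].
- apply: WitH1 => // x; move=> /in2[]->; first by rewrite eirr.
  by [].
- by apply: WitH1 => // x; rewrite inE => /eqP->; rewrite eirr.
Qed.

Lemma F2 b y : full e c b -> c b != c a1 -> e a1 b -> e a1 y -> c y = c b -> y = b.
Proof.
move=> fb cb eb ey cy; apply/eqP; apply: contraT => yb.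
have b1 : a1 != b by rewrite eq_sym; apply: col_neq.
have b2 : b != a2 by apply: col_neq; rewrite ca.
apply: NGc; apply: (mkgood b1 a12 b2).
- apply: (WitH2 (j := c b)) => //.
    move=> x /in3[]->; [by rewrite eirr | by [] | ].
    by rewrite (negbTE (sameNadj _)).
  exists y; last by rewrite ey cy eqxx.
  rewrite !inE !negb_or yb andbT /=; apply/andP; split.
    by rewrite eq_sym; apply: adj_neq.
  by apply: col_neq; rewrite cy ca.
- apply: (WitH2 (j := c a1)) => //.
    by move=> x /in2[]->; [rewrite eirr | rewrite ca].
  exists a1; last by rewrite esym eb eqxx.
  by rewrite !inE negb_or a12 andbT.
- by apply: WitH1 => // x; rewrite inE => /eqP->; rewrite eirr.
Qed.

Lemma F3 b y : full e c b -> c b != c a1 -> e b y -> c y = c a1 -> (y == a1) || (y == a2).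
Proof.
move=> fb cb ey cy; apply: contraT; rewrite negb_or => /andP[y1 y2].
have b1 : b != a1 by apply: col_neq.
have b2 : b != a2 by apply: col_neq; rewrite ca.
apply: NGc; apply: (mkgood b1 b2 a12).
- apply: (WitH2 (j := c a1)) => //.
    by move=> x /in3[]->; [rewrite eirr | | rewrite ca].
  exists y; last by rewrite ey cy eqxx.
  by rewrite !inE !negb_or y1 y2 !andbT; rewrite eq_sym; apply: adj_neq.
- apply: WitH1 => // x; move=> /in2[]->; first by rewrite eirr.
  by apply: sameNadj; rewrite ca.
- by apply: WitH1 => // x; rewrite inE => /eqP->; rewrite eirr.
Qed.

End Base.

Section Base2.
Variables a1 a2 : T.
Hypothesis a12 : a1 != a2.
Hypothesis ca : c a2 = c a1.
Hypothesis fa1 : full e c a1.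
Hypothesis fa2 : full e c a2.

Lemma G1 b y : full e c b -> c b != c a1 -> e a1 b -> e b y -> c y = c a1 -> y = a1.
Proof.
move=> fb cb eb ey cy.
case/orP: (F3 a12 ca fa1 fa2 fb cb ey cy) => /eqP // E; subst y.
have [b' [b'b cb' fb']] := other (c b) b.
have cb'1 : c b' != c a1 by rewrite cb'.
have a21 : a2 != a1 by rewrite eq_sym.
have ca' : c a1 = c a2 by [].
case/orP: (F1 a12 ca fa1 fa2 fb' cb'1) => eb'.
  by move: b'b; rewrite (F2 a12 ca fa1 fa2 fb cb eb eb' cb') eqxx.
have cb2 : c b != c a2 by rewrite ca.
have eb2 : e a2 b by rewrite esym.
by move: b'b; rewrite (F2 a21 ca' fa2 fa1 fb cb2 eb2 eb' cb') eqxx.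
Qed.

Lemma nbr_full x : e a1 x -> full e c x /\ (forall y, e x y -> c y = c a1 -> y = a1).
Proof.
move=> ex.
have cx : c x != c a1 by rewrite eq_sym; apply: (properP pc).
have [p [q [pq cp cq fp fq]]] := H2 (c x).
have cp1 : c p != c a1 by rewrite cp.
have cq1 : c q != c a1 by rewrite cq.
suff [b [fb cb eb]] : exists b, [/\ full e c b, c b = c x & e a1 b].
  have E : x = b by apply: (F2 a12 ca fa1 fa2 fb _ eb ex); rewrite cb.
  subst b; split => // y; apply: (G1 fb cx ex).
case/orP: (F1 a12 ca fa1 fa2 fp cp1) => ep; first by exists p.
case/orP: (F1 a12 ca fa1 fa2 fq cq1) => eq; first by exists q.
have a21 : a2 != a1 by rewrite eq_sym.
have cp2 : c p != c a2 by rewrite ca.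
have cqp : c q = c p by rewrite cp cq.
by move: pq; rewrite (F2 a21 (sym_eq ca) fa2 fa1 fp cp2 ep eq cqp) eqxx.
Qed.

End Base2.

Lemma closed_conn (Q : {set T}) x y : (forall u v, u \in Q -> e u v -> v \in Q) ->
  x \in Q -> connect e x y -> y \in Q.
Proof.
move=> cl xQ /connectP[p pth ->]; elim: p x xQ pth => //= z p IH x xQ /andP[exz pth].
exact: IH (cl _ _ xQ exz) pth.
Qed.

Lemma core_contra (v0 : T) : connected e -> False.
Proof.
move=> conn.
have [a1 [a2 [a12 c1 c2 fa1 fa2]]] := H2 (c v0).
have ca : c a2 = c a1 by rewrite c1 c2.
pose Q := [set x | (x == a1) || e a1 x].
have clQ : forall u v, u \in Q -> e u v -> v \in Q.
  move=> u y; rewrite !inE => /orP[/eqP->|eu] euy; first by rewrite euy orbT.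
  have [fu uu] := nbr_full a12 ca fa1 fa2 eu.
  case: (eqVneq y a1) => [->|ya1] //=.
  case: (eqVneq (c y) (c a1)) => [cy|cy]; first by move: ya1; rewrite (uu y euy cy) eqxx.
  have [z ez cz] := fullP fa1 cy.
  have [fz uz] := nbr_full a12 ca fa1 fa2 ez.
  have cux : c u != c a1 by rewrite eq_sym; apply: (properP pc).
  have cuy : c y != c u by rewrite eq_sym; apply: (properP pc).
  have euz : e u z.
    apply: contraT => nuz.
    apply: NGc.
    have a2u : a2 != u by apply: col_neq; rewrite ca eq_sym.
    have a2z : a2 != z by apply: col_neq; rewrite ca cz eq_sym.
    have duz : u != z by apply: col_neq; rewrite cz eq_sym.
    have na2u : ~~ e a2 u.
      apply/negP=> e2u; move: a12; rewrite (uu a2) ?eqxx //; by rewrite esym.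
    have na2z : ~~ e a2 z.
      apply/negP=> e2z; move: a12; rewrite (uz a2) ?eqxx //; by rewrite esym.
    apply: (mkgood a2u a2z duz).
    - apply: WitH1 => // x; move=> /in3[]-> //; by rewrite eirr.
    - apply: WitH1 => // x; move=> /in2[]-> //; by rewrite eirr.
    - by apply: WitH1 => // x; rewrite inE => /eqP->; rewrite eirr.
  have [u' [u'u cu' fu']] := other (c u) u.
  have czu : c z != c u by rewrite cz.
  have uu' : u != u' by rewrite eq_sym.
  by rewrite (F2 uu' cu' fu fu' fz czu euz euy (sym_eq cz)).
have a1Q : a1 \in Q by rewrite inE eqxx.
have a2Q := closed_conn clQ a1Q (conn a1 a2).
move: a2Q; rewrite inE (negbTE (sameNadj (sym_eq ca))) orbF.
by rewrite eq_sym (negbTE a12).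
Qed.

End Core.

Section Main.
Variable T : finType.
Variable e : rel T.
Hypothesis esym : symmetric e.
Hypothesis eirr : irreflexive e.

Lemma memC0 (x : T) : x \in ~: (set0 : {set T}).
Proof. by rewrite in_setC in_set0. Qed.

Lemma induced_irr (A : {set T}) : irreflexive (induced e A).
Proof. by move=> x; rewrite /induced eirr. Qed.

Lemma chi_setT : chi e <= chi (induced e (~: set0)).
Proof.
apply: chi_le.
have /existsP[c0 pc0] := chi_col (induced_irr (A := ~: set0)).
apply/existsP; exists [ffun x => c0 (exist _ x (memC0 x))].
apply: properI => x y exy; rewrite !ffunE.
exact: (properP pc0 (x := exist _ x (memC0 x)) (y := exist _ y (memC0 y)) exy).
Qed.

Lemma shrink (c2 : {ffun T -> 'I_(chi e)}) (i : 'I_(chi e)) f v1 :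
  proper_col e c2 -> v1 != f -> (forall v, v != f -> c2 v != i) ->
  chi (induced e (~: [set f])) < chi e.
Proof.
move=> pc2 v1f hi.
have := hi v1 v1f; rewrite eq_sym => /unlift_some [d _ _].
have hv : forall x : {x : T | x \in ~: [set f]}, c2 (val x) != i.
  by move=> [x hx] /=; apply: hi; move: hx; rewrite !inE.
have : colourable (induced e (~: [set f])) (chi e).-1.
  apply/existsP; exists [ffun x => odflt d (unlift i (c2 (val x)))].
  apply: properI => x y exy; rewrite !ffunE.
  have := hv x; rewrite eq_sym => /unlift_some [jx Ex ->].
  have := hv y; rewrite eq_sym => /unlift_some [jy Ey ->] /=.
  apply: contraNneq (properP pc2 (exy : e (val x) (val y))) => Ej.
  by rewrite Ex Ey Ej.
move/chi_le => h; apply: leq_ltn_trans h _.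
by rewrite ltn_predL; exact: (leq_ltn_trans (leq0n _) (ltn_ord i)).
Qed.

Lemma ivs_one f : chi (induced e (~: [set f])) < chi e -> ivs_chi e = 1.
Proof.
move=> hf; apply/eqP; rewrite eqn_leq; apply/andP; split.
  have := @bigmin_le _ (fun S : {set T} => independent e S && (chi (induced e (~: S)) < chi e)) (fun S => #|S|) #|T| [set f].
  rewrite cards1; apply; rewrite hf andbT.
  apply/forallP=> x; apply/implyP; rewrite inE => /eqP->.
  by apply/forallP=> y; apply/implyP; rewrite inE => /eqP->; rewrite eirr.
apply: (big_ind (fun m => 0 < m)).
- by apply/card_gt0P; exists f.
- by move=> x y hx hy; rewrite leq_min hx hy.
- move=> S /andP[_ hS]; rewrite lt0n; apply/negP=> /eqP/cards0_eq E; subst S.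
  by move: hS; rewrite ltnNge chi_setT.
Qed.

Lemma recol (c : {ffun T -> 'I_(chi e)}) (i : 'I_(chi e)) : proper_col e c -> 1 < #|T| ->
  (forall a1 a2, a1 != a2 -> c a1 = i -> c a2 = i -> full e c a1 -> full e c a2 -> False) ->
  exists f, chi (induced e (~: [set f])) < chi e.
Proof.
move=> pc hT hi.
pose m v := [pick l | (l != c v) && ~~ [exists x, e v x && (c x == l)]].
pose c2 := [ffun v => if c v == i then odflt (c v) (m v) else c v].
have pc2 : proper_col e c2.
  apply: properI => u v euv; rewrite !ffunE.
  have cuv := properP pc euv.
  case: (eqVneq (c u) i) => [cu|cu]; case: (eqVneq (c v) i) => [cv|cv] /=.
  - by move: cuv; rewrite cu cv eqxx.
  - rewrite /m; case: pickP => [l /andP[lu /existsPn nl]|_] /=; last by rewrite cu eq_sym.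
    apply/negP => /eqP E; have := nl v; by rewrite euv -E eqxx.
  - rewrite /m; case: pickP => [l /andP[lv /existsPn nl]|_] /=; last by rewrite cv.
    apply/negP => /eqP E; have := nl u; by rewrite esym euv E eqxx.
  - exact: cuv.
have cls : forall v, c2 v = i -> c v = i /\ full e c v.
  move=> v; rewrite ffunE; case: (eqVneq (c v) i) => [cv|cv] /=; last first.
    by move=> E; move: cv; rewrite E eqxx.
  rewrite /m; case: pickP => [l /andP[lv _] /= E|nop _]; first by move: lv; rewrite E cv eqxx.
  split => //; apply/forallP=> l; apply/implyP=> lv.
  by have := nop l; rewrite /= lv /= => /negbFE.
have [v0 _] : exists v0 : T, true.
  by case/card_gt0P: (ltnW hT) => v0 _; exists v0.
have [f hf] : exists f, forall v, v != f -> c2 v != i.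
  case: (pickP (fun v => c2 v == i)) => [f /eqP cf|none].
    exists f => v vf; apply/negP=> /eqP cv.
    have [c1 f1] := cls f cf; have [c1' f1'] := cls v cv.
    exact: (hi v f vf c1' c1 f1' f1).
  by exists v0 => v _; rewrite (none v).
have [v1 v1f] : exists v1, v1 != f.
  have : 0 < #|[set~ f]| by rewrite cardsC1 -subn1 subn_gt0.
  by case/card_gt0P => v1; rewrite !inE => v1f; exists v1.
by exists f; exact: shrink pc2 v1f hf.
Qed.

End Main.

Theorem lemma1 (T : finType) (e : rel T) :
  symmetric e -> irreflexive e -> connected e ->
  sn e + 2 = #|T| -> ivs_chi e = 1.
Proof.
move=> esym eirr conn hsn.
have hT : 1 < #|T| by rewrite -hsn addn2.
have /existsP[c pc] := chi_col eirr.
case: (boolP [forall i : 'I_(chi e), exists a1, exists a2,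
   [&& a1 != a2, c a1 == i, c a2 == i, full e c a1 & full e c a2]]) => [H | /forallPn[i Hi]].
- exfalso.
  have H2 : forall i, exists a1, exists a2,
      [/\ a1 != a2, c a1 = i, c a2 = i, full e c a1 & full e c a2].
    move=> i; have /existsP[a1 /existsP[a2 /and5P[h1 /eqP h2 /eqP h3 h4 h5]]] := (forallP H) i.
    by exists a1, a2.
  have [v0 _] : exists v0 : T, true.
    by case/card_gt0P: (ltnW hT) => v0 _; exists v0.
  case: (boolP (good3 c)) => g; last exact: (core_contra esym eirr pc H2 g v0 conn).
  case/existsP: g => u1 /existsP[u2 /existsP[u3 /and4P[d12 d13 d23 dD]]].
  have hle := sn_le pc dD.
  have cU : #|[set u1; u2; u3]| = 3.
    rewrite setUC cardsU1 cards2 !inE d12 !(eq_sym u3) (negbTE d13) (negbTE d23).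
    done.
  have hc := cardsC [set u1; u2; u3]; rewrite cU in hc.
  lia.
- have hi : forall a1 a2, a1 != a2 -> c a1 = i -> c a2 = i -> full e c a1 -> full e c a2 -> False.
    move=> a1 a2 h1 h2 h3 h4 h5; move/negP: Hi; apply; apply/existsP; exists a1.
    by apply/existsP; exists a2; rewrite h1 h2 h3 h4 h5 !eqxx.
  have [f hf] := recol esym pc hT hi.
  exact: (ivs_one eirr hf).
Qed.
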